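(* Let $k$ be a field, $V$ a $k$-vector space and $\varphi\in\operatorname{End}_k(V)$ a finite potent endomorphism with index $i(\varphi)=r$, and let $V=W_\varphi\oplus U_\varphi$ be the AST-decomposition of $V$ determined by $\varphi$. If $f\in\operatorname{End}_k(V)$ is an endomorphism such that $f\circ\varphi^{r}=\varphi^{r}\circ f$, then $W_\varphi$ and $U_\varphi$ are invariant under $f$.
   Context: An endomorphism $\varphi$ of a $k$-vector space $V$ is finite potent if $\varphi^n(V)$ is finite dimensional for some $n$. For such $\varphi$, the AST-decomposition is $V=U_\varphi\oplus W_\varphi$ where $U_\varphi=\{v\in V: \varphi^m(v)=0 \text{ for some } m\}$ and $W_\varphi=\{v\in V: p(\varphi)(v)=0 \text{ for some } p(x)\in k[x] \text{ coprime to } x\}$; both are $\varphi$-invariant, $\varphi|_{U_\varphi}$ is nilpotent, $W_\varphi$ is finite dimensional and $\varphi|_{W_\varphi}$ is an automorphism of $W_\varphi$. The index $i(\varphi)$ is the nilpotency order of $\varphi|_{U_\varphi}$, i.e. the smallest $r\ge 0$ with $(\varphi|_{U_\varphi})^r=0$. *)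

(* Defs.v *)
From HB Require Import structures.
From mathcomp Require Import all_boot all_order all_algebra.
Set Implicit Arguments. Unset Strict Implicit. Unset Printing Implicit Defensive.
Import GRing.Theory.
Local Open Scope ring_scope.

Definition in_span (k : fieldType) (V : lmodType k) (s : seq V) (v : V) : Prop :=
  exists c : 'I_(size s) -> k, v = \sum_(i < size s) c i *: s`_i.

(* phi^n(V) is finite dimensional: it is contained in the span of a finite family
   (the image of a linear map is a subspace, so this is finite dimensionality). *)
Definition finite_potent (k : fieldType) (V : lmodType k) (phi : {linear V -> V}) : Prop :=
  exists n : nat, exists s : seq V, forall v : V, in_span s (iter n phi v).

Definition poly_app (k : fieldType) (V : lmodType k) (p : {poly k}) (phi : {linear V -> V})
  (v : V) : V := \sum_(i < size p) p`_i *: iter i phi v.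

Definition U_part (k : fieldType) (V : lmodType k) (phi : {linear V -> V}) (v : V) : Prop :=
  exists m : nat, iter m phi v = 0.

Definition W_part (k : fieldType) (V : lmodType k) (phi : {linear V -> V}) (v : V) : Prop :=
  exists p : {poly k}, coprimep p 'X /\ poly_app p phi v = 0.

Definition fp_index (k : fieldType) (V : lmodType k) (phi : {linear V -> V}) (r : nat) : Prop :=
  (forall v, U_part phi v -> iter r phi v = 0) /\
  (forall r', (forall v, U_part phi v -> iter r' phi v = 0) -> (r <= r')%N).

(* Main.v *)
Require Import Defs.
From HB Require Import structures.
From mathcomp Require Import all_boot all_order all_algebra.
From mathcomp Require Import ring.
Set Implicit Arguments. Unset Strict Implicit. Unset Printing Implicit Defensive.
Import GRing.Theory.
Local Open Scope ring_scope.

Section PA.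
Variables (k : fieldType) (V : lmodType k) (phi : {linear V -> V}).
Local Notation pa p := (poly_app p phi).

Lemma iter_lin n a (x y : V) : iter n phi (a *: x + y) = a *: iter n phi x + iter n phi y.
Proof. by elim: n => //= n ->; rewrite linearD linearZ. Qed.

Lemma iter0v n : iter n phi 0 = 0.
Proof. by elim: n => //= n ->; rewrite linear0. Qed.

Lemma pa_widen (p : {poly k}) n v : (size p <= n)%N ->
  pa p v = \sum_(i < n) p`_i *: iter i phi v.
Proof.
move=> hn; rewrite /poly_app (big_ord_widen n (fun i => p`_i *: iter i phi v) hn).
rewrite [RHS](bigID (fun i : 'I_n => (i < size p)%N)) /= [X in _ + X]big1 ?addr0 //.
by move=> i; rewrite -leqNgt => h; rewrite nth_default // scale0r.
Qed.

Lemma pa_lin (p : {poly k}) a x y : pa p (a *: x + y) = a *: pa p x + pa p y.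
Proof.
rewrite /poly_app scaler_sumr -big_split /=; apply: eq_bigr => i _.
by rewrite iter_lin scalerDr !scalerA mulrC.
Qed.

Lemma pa0v (p : {poly k}) : pa p 0 = 0.
Proof. by rewrite /poly_app big1 // => i _; rewrite iter0v scaler0. Qed.

Lemma paD (p q : {poly k}) v : pa (p + q) v = pa p v + pa q v.
Proof.
pose n := maxn (size p) (size q).
rewrite (pa_widen v (size_polyD p q)) (@pa_widen p n) ?leq_maxl //.
rewrite (@pa_widen q n) ?leq_maxr // -big_split; apply: eq_bigr => i _.
by rewrite coefD scalerDl.
Qed.

Lemma paC (c : k) v : pa c%:P v = c *: v.
Proof.
rewrite (@pa_widen _ 1) ?size_polyC ?leq_b1 // big_ord1 /=.
by rewrite coefC.
Qed.

Lemma paCM c (p : {poly k}) v : pa (c%:P * p) v = c *: pa p v.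
Proof.
rewrite (@pa_widen _ (size p)); last by rewrite mul_polyC size_scale_leq.
rewrite /poly_app scaler_sumr; apply: eq_bigr => i _.
by rewrite coefCM scalerA.
Qed.

Lemma paXM (p : {poly k}) v : pa ('X * p) v = pa p (phi v).
Proof.
rewrite (@pa_widen _ (size p).+1); last first.
  by apply: leq_trans (size_polyMleq _ _) _; rewrite size_polyX.
rewrite big_ord_recl /= coefXM /= scale0r add0r /poly_app; apply: eq_bigr => i _.
by rewrite coefXM /= -iterSr.
Qed.

Lemma pa_comm (p : {poly k}) v : pa p (phi v) = phi (pa p v).
Proof.
rewrite /poly_app linear_sum; apply: eq_bigr => i _.
by rewrite linearZ /= -iterS iterSr.
Qed.

Lemma paM (p q : {poly k}) v : pa (p * q) v = pa p (pa q v).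
Proof.
elim/poly_ind: p v => [|p c IH] v.
  by rewrite mul0r /poly_app size_poly0 !big_ord0.
rewrite mulrDl -mulrA (mulrC 'X) mulrA -(mulrC 'X) paD paXM IH paCM.
rewrite paD paC mulrC paXM.
by rewrite pa_comm.
Qed.
End PA.

Section PB.
Variables (k : fieldType) (V : lmodType k) (phi : {linear V -> V}).
Local Notation pa p := (poly_app p phi).

Lemma dep n (s : seq V) (hs : forall v, in_span s (iter n phi v)) u :
  exists g : {poly k}, g != 0 /\ pa g (iter n phi u) = 0.
Proof.
pose m := size s.
have /fin_all_exists [C hC] : forall i : 'I_m.+1, exists c : 'I_m -> k,
    iter i phi (iter n phi u) = \sum_(j < m) c j *: s`_j.
  move=> i; have [c hc] := hs (iter i phi u); exists c.
  by rewrite -iterD addnC iterD.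
pose M := \matrix_(i < m.+1, j < m) C i j.
have hk : kermx M != 0.
  rewrite kermx_eq0 /row_free; apply/negP => /eqP h.
  by have := rank_leq_col M; rewrite h ltnn.
have [w /sub_kermxP hw wn0] := rowV0Pn hk.
have [i0 hi0] := rV0Pn w wn0.
exists (\poly_(i < m.+1) w 0 (inord i)); split.
  apply/eqP => /(congr1 (fun p : {poly k} => p`_i0)).
  by rewrite coef_poly ltn_ord inord_val coef0; apply/eqP.
rewrite (@pa_widen _ _ phi _ m.+1) ?size_poly //.
under eq_bigr => i _ do rewrite coef_poly ltn_ord inord_val hC scaler_sumr.
rewrite exchange_big /= big1 // => j _.
have -> : \sum_(i < m.+1) w 0 i *: (C i j *: s`_j) = (w *m M) 0 j *: s`_j.
  rewrite mxE scaler_suml; apply: eq_bigr => i _.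
  by rewrite mxE scalerA.
by rewrite hw mxE scale0r.
Qed.
End PB.

Section PC.
Variables (k : fieldType) (V : lmodType k) (phi : {linear V -> V}).
Local Notation pa p := (poly_app p phi).

Lemma paXn n v : pa ('X^n) v = iter n phi v.
Proof.
elim: n v => [|n IH] v.
  by rewrite expr0 -polyC1 paC scale1r.
by rewrite exprS paXM IH -iterSr.
Qed.

Lemma pa1 v : pa 1 v = v.
Proof. by rewrite -polyC1 paC scale1r. Qed.

Lemma paDv (p : {poly k}) x y : pa p (x + y) = pa p x + pa p y.
Proof. by have := pa_lin phi p 1 x y; rewrite !scale1r. Qed.

Lemma imW (hphi : finite_potent phi) r
  (hr : forall v, U_part phi v -> iter r phi v = 0) u :
  W_part phi (iter r phi u).
Proof.
have [n [s hs]] := hphi.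
have [g [gn0 hg]] := dep hs u.
have [j [h hh hgq]] := multiplicity_XsubC g 0.
rewrite gn0 /= in hh; rewrite polyC0 subr0 in hgq.
rewrite hgq paM paXn -iterD in hg.
set M := (j + n)%N in hg.
have hg' : pa (h * 'X^M) u = 0 by rewrite paM paXn.
have cp : coprimep h 'X by rewrite coprimepX.
have /Bezout_eq1_coprimepP [[a b] /= hab] := coprimep_expr M cp.
exists h; split => //.
have du : u = pa (a * h) u + pa (b * 'X^M) u by rewrite -paD hab pa1.
rewrite -paXn -paM du paDv.
have -> : pa (h * 'X^r) (pa (b * 'X^M) u) = 0.
  rewrite -paM.
  have -> : h * 'X^r * (b * 'X^M) = ('X^r * b) * (h * 'X^M) by ring.
  by rewrite paM hg' pa0v.
rewrite addr0.
rewrite -paM.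
have -> : h * 'X^r * (a * h) = 'X^r * (h * a * h) by ring.
rewrite paM paXn; apply: hr; exists M.
rewrite -paXn -paM.
have -> : 'X^M * (h * a * h) = (h * a) * (h * 'X^M) by ring.
by rewrite paM hg' pa0v.
Qed.
End PC.

Unset Implicit Arguments.
Theorem lemma3p2 (k : fieldType) (V : lmodType k) (phi : {linear V -> V})
  (hphi : finite_potent phi) (r : nat) (hr : fp_index phi r)
  (f : {linear V -> V})
  (hf : forall v : V, f (iter r phi v) = iter r phi (f v)) :
  (forall v : V, W_part phi v -> W_part phi (f v)) /\
  (forall v : V, U_part phi v -> U_part phi (f v)).
Proof.
have [hr1 _] := hr.
split.
  move=> v [p [cp hp]].
  have /Bezout_eq1_coprimepP [[a b] /= hab] := coprimep_expr r cp.
  have -> : v = iter r phi (poly_app b phi v).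
    rewrite -{1}[v](pa1 phi) -hab paD paM hp pa0v add0r mulrC paM paXn //.
  by rewrite hf; apply: imW.
move=> v hv; exists r.
by rewrite -hf hr1 // linear0.
Qed.
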